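(* Let $a\in\mathbb N$, $N\in\mathbb N$, and let $(n_p)_{1\le p\le N}$ and $(k_p)_{1\le p\le N}$ be strictly increasing sequences in $\mathbb N$ such that, with $n_0:=0$, $k_0:=0$, $n_{N+1}:=n_N+1$, $k_{N+1}:=k_N$, $$\frac{k_p-k_{p-1}}{n_p-n_{p-1}}-\frac{k_{p+1}-k_p}{n_{p+1}-n_p}>0\qquad\forall\,1\le p\le N.$$ Define $\gamma=(\gamma_n)_{n\ge1}$ by $\gamma_n:=0$ for $n\notin\{n_1,\dots,n_N\}$ and $$\gamma_{n_p}:=\frac1a\Big(\frac{k_p-k_{p-1}}{n_p-n_{p-1}}-\frac{k_{p+1}-k_p}{n_{p+1}-n_p}\Big),\qquad 1\le p\le N.$$ Then for all $1\le p\le N$, $\check\omega_{n_p}(\gamma)=k_p/a$ and $\omega_{n_p}(\gamma)=n_p^2-2\check\omega_{n_p}(\gamma)\in\frac1a\mathbb Z$. Consequently every $u_0\in\mathrm{Iso}_\gamma:=\{u\in L^2_{r,0}:\gamma_n(u)=\gamma_n\ \forall n\ge1\}$ is a finite gap potential, the solution $t\mapsto\mathcal S(t)u_0$ of the BO equation is periodic in time with period $T=2\pi a$, and $\mathrm{Iso}_\gamma$ is entirely filled with $T$-periodic solutions.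
   Context: For real $\gamma=(\gamma_n)_{n\ge1}$ with $\sum n|\gamma_n|<\infty$: $\check\omega_n(\gamma):=\sum_{k\ge1}k\gamma_k-\sum_{k>n}(k-n)\gamma_k$ and $\omega_n(\gamma):=n^2-2\check\omega_n(\gamma)$. $\mathbb T=\mathbb R/2\pi\mathbb Z$; $H^s_{r,0}$ is the real Sobolev space of zero-mean real-valued distributions on $\mathbb T$, $L^2_{r,0}=H^0_{r,0}$. BO equation: $\partial_tu=H\partial_x^2u-\partial_x(u^2)$, $H$ the Hilbert transform (multiplier $-i\,\mathrm{sign}(n)$). $h^\sigma_+$: complex sequences with $\sum n^{2\sigma}|z_n|^2<\infty$. Known facts taken as given: for $s>-1/2$ BO is globally well posed in $H^s_{r,0}$ with solution map $\mathcal S(t)$; there is $\Phi:u\mapsto(\zeta_n(u))_{n\ge1}$, a homeomorphism $H^s_{r,0}\to h^{s+1/2}_+$ for each $s>-1/2$, with $\zeta_n(\mathcal S(t)u)=e^{i\omega_nt}\zeta_n(u)$, $\omega_n=\omega_n(\gamma(u))$, where $\gamma_n(u):=|\zeta_n(u)|^2$ (the actions). A finite gap potential is a $u$ with $\zeta_n(u)=0$ for all sufficiently large $n$. *)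

(* Defs.v *)
From Stdlib Require Import Reals Lra Lia ZArith.
From Coquelicot Require Import Coquelicot.
Open Scope R_scope.

(* A real sequence gamma : nat -> R, meaningful for indices n >= 1
   (gamma 0 is ignored by every definition below). *)

(* \check\omega_n(gamma) = sum_{k>=1} k gamma_k - sum_{k>n} (k-n) gamma_k *)
Definition check_omega (n : nat) (gamma : nat -> R) : R :=
  Series (fun k => INR k * gamma k)
  - Series (fun j => INR (S j) * gamma (n + S j)%nat).

Definition omega (n : nat) (gamma : nat -> R) : R :=
  INR n ^ 2 - 2 * check_omega n gamma.

Definition ext_n (N : nat) (n : nat -> nat) (p : nat) : nat :=
  if (p =? 0)%nat then 0%nat
  else if (p <=? N)%nat then n p else (n N + 1)%nat.

Definition ext_k (N : nat) (k : nat -> nat) (p : nat) : nat :=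
  if (p =? 0)%nat then 0%nat
  else if (p <=? N)%nat then k p else k N.

Definition slope (N : nat) (n k : nat -> nat) (p : nat) : R :=
  (INR (ext_k N k p) - INR (ext_k N k (p - 1))) /
  (INR (ext_n N n p) - INR (ext_n N n (p - 1))).

Definition cis (theta : R) : C := (cos theta, sin theta).

(* Main.v *)
Require Import Defs.
From Stdlib Require Import Reals ZArith Lra Lia Classical.
From Coquelicot Require Import Coquelicot.
Open Scope R_scope.

Lemma Series_fin (a : nat -> R) (M : nat) :
  (forall k, (M < k)%nat -> a k = 0) -> is_series a (sum_n a M).
Proof.
  intros H. unfold is_series.
  apply filterlim_ext_loc with (f := fun _ => sum_n a M).
  - exists M. intros j Hj. induction j.
    + assert (M = 0)%nat by lia. subst. reflexivity.
    + destruct (Nat.eq_dec M (S j)). subst; reflexivity.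
      rewrite sum_Sn, <- IHj by lia. rewrite (H (S j)) by lia. symmetry; apply Rplus_0_r.
  - apply filterlim_const.
Qed.

Lemma Series_fin_eq a M : (forall k, (M < k)%nat -> a k = 0) -> Series a = sum_n a M.
Proof. intros H. apply is_series_unique, Series_fin, H. Qed.

Lemma ex_series_fin a M : (forall k, (M < k)%nat -> a k = 0) -> ex_series a.
Proof. intros H. exists (sum_n a M). apply (Series_fin a M H). Qed.

Definition spike (i : nat) (c : R) (m : nat) : R := if (m =? i)%nat then c else 0.

Lemma sum_spike i c : sum_n (spike i c) i = c.
Proof.
  assert (H : forall j, (j < i)%nat -> sum_n (spike i c) j = 0).
  { induction j; intros Hj.
    - rewrite sum_O. unfold spike. destruct (0 =? i)%nat eqn:E; [apply Nat.eqb_eq in E; lia|reflexivity].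
    - rewrite sum_Sn, IHj by lia. unfold spike. destruct (S j =? i)%nat eqn:E; [apply Nat.eqb_eq in E; lia|].
      apply Rplus_0_r. }
  destruct i.
  - rewrite sum_O. unfold spike. simpl. reflexivity.
  - rewrite sum_Sn, H by lia. unfold spike. rewrite Nat.eqb_refl. apply Rplus_0_l.
Qed.

Lemma Series_spike i c : Series (spike i c) = c.
Proof.
  rewrite (Series_fin_eq _ i). apply sum_spike.
  intros k Hk. unfold spike. destruct (k =? i)%nat eqn:E; [apply Nat.eqb_eq in E; lia|reflexivity].
Qed.

Definition fin_supp (f : nat -> R) := exists M, forall k, (M < k)%nat -> f k = 0.

Lemma check_omega_plus m f g : fin_supp f -> fin_supp g ->
  check_omega m (fun x => f x + g x) = check_omega m f + check_omega m g.
Proof.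
  intros [M1 H1] [M2 H2]. unfold check_omega.
  rewrite (Series_ext _ (fun k => INR k * f k + INR k * g k)) by (intros; ring).
  rewrite (Series_ext (fun j => INR (S j) * (f (m + S j)%nat + g (m + S j)%nat))
    (fun j => INR (S j) * f (m + S j)%nat + INR (S j) * g (m + S j)%nat)) by (intros; ring).
  rewrite !Series_plus.
  - ring.
  - apply ex_series_fin with M1. intros. rewrite H1 by lia. ring.
  - apply ex_series_fin with M2. intros. rewrite H2 by lia. ring.
  - apply ex_series_fin with M1. intros. rewrite H1 by lia. ring.
  - apply ex_series_fin with M2. intros. rewrite H2 by lia. ring.
Qed.

Lemma check_omega_ext m f g : (forall j, (1 <= j)%nat -> f j = g j) ->
  check_omega m f = check_omega m g.
Proof.
  intros H. unfold check_omega. f_equal.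
  - apply Series_ext. intros [|k]. simpl; ring. rewrite H by lia. reflexivity.
  - apply Series_ext. intros j. rewrite H by lia. reflexivity.
Qed.

Lemma check_omega_spike m i c : (1 <= i)%nat ->
  check_omega m (spike i c) = INR (Nat.min i m) * c.
Proof.
  intros Hi. unfold check_omega.
  rewrite (Series_ext _ (spike i (INR i * c))).
  2:{ intros k. unfold spike. destruct (k =? i)%nat eqn:E.
      apply Nat.eqb_eq in E; subst; ring. ring. }
  rewrite Series_spike.
  destruct (le_lt_dec i m) as [Hle|Hlt].
  - rewrite (Series_ext _ (fun _ => 0)).
    2:{ intros j. unfold spike. destruct (m + S j =? i)%nat eqn:E.
        apply Nat.eqb_eq in E; lia. ring. }
    rewrite (Series_fin_eq _ 0) by (intros; reflexivity). rewrite sum_O. rewrite Nat.min_l by lia. ring.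
  - rewrite (Series_ext _ (spike (i - m - 1) (INR (i - m) * c))).
    2:{ intros j. unfold spike. destruct (m + S j =? i)%nat eqn:E;
        destruct (j =? i - m - 1)%nat eqn:E2.
        - apply Nat.eqb_eq in E. f_equal. f_equal. lia.
        - apply Nat.eqb_eq in E. apply Nat.eqb_neq in E2. lia.
        - apply Nat.eqb_eq in E2. apply Nat.eqb_neq in E. lia.
        - ring. }
    rewrite Series_spike. rewrite Nat.min_r by lia. rewrite minus_INR by lia. ring.
Qed.

Lemma check_omega_zero m : check_omega m (fun _ => 0) = 0.
Proof.
  unfold check_omega.
  rewrite (Series_fin_eq _ 0) by (intros; ring).
  rewrite (Series_fin_eq _ 0) by (intros; ring).
  rewrite !sum_O. ring.
Qed.

Lemma fin_supp_plus f g : fin_supp f -> fin_supp g -> fin_supp (fun x => f x + g x).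
Proof.
  intros [M1 H1] [M2 H2]. exists (Nat.max M1 M2). intros k Hk.
  rewrite H1, H2 by lia. ring.
Qed.

Lemma fin_supp_spike i c : fin_supp (spike i c).
Proof.
  exists i. intros k Hk. unfold spike. destruct (k =? i)%nat eqn:E; [apply Nat.eqb_eq in E; lia|reflexivity].
Qed.

Fixpoint Gs (n : nat -> nat) (gamma : nat -> R) (P : nat) : nat -> R :=
  match P with
  | O => fun _ => 0
  | S P' => fun x => Gs n gamma P' x + spike (n (S P')) (gamma (n (S P'))) x
  end.

Fixpoint Fs (n : nat -> nat) (gamma : nat -> R) (m P : nat) : R :=
  match P with
  | O => 0
  | S P' => Fs n gamma m P' + INR (Nat.min (n (S P')) m) * gamma (n (S P'))
  end.

Lemma Gs_fin n gamma P : fin_supp (Gs n gamma P).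
Proof.
  induction P; simpl.
  - exists 0%nat. reflexivity.
  - apply fin_supp_plus. exact IHP. apply fin_supp_spike.
Qed.

Lemma Gs_check n gamma m P : (forall p, (1 <= p <= P)%nat -> (1 <= n p)%nat) ->
  check_omega m (Gs n gamma P) = Fs n gamma m P.
Proof.
  induction P; intros H.
  - apply check_omega_zero.
  - change (check_omega m (fun x => Gs n gamma P x + spike (n (S P)) (gamma (n (S P))) x)
       = Fs n gamma m P + INR (Nat.min (n (S P)) m) * gamma (n (S P))).
    rewrite check_omega_plus by (apply Gs_fin || apply fin_supp_spike).
    rewrite IHP by (intros; apply H; lia).
    rewrite check_omega_spike by (apply H; lia). rewrite Nat.min_comm. 
    try reflexivity.
Qed.

Lemma Gs_none n gamma P m : (forall p, (1 <= p <= P)%nat -> n p <> m) -> Gs n gamma P m = 0.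
Proof.
  induction P; intros H; simpl. reflexivity.
  rewrite IHP by (intros; apply H; lia). unfold spike.
  destruct (m =? n (S P))%nat eqn:E. apply Nat.eqb_eq in E. exfalso. apply (H (S P)); [lia|auto].
  ring.
Qed.

Lemma strict_mono (N : nat) (n : nat -> nat)
  (Hninc : forall p, (1 <= p)%nat -> (p < N)%nat -> (n p < n (S p))%nat) :
  forall q p, (1 <= p)%nat -> (p < q)%nat -> (q <= N)%nat -> (n p < n q)%nat.
Proof.
  induction q; intros p H1 H2 H3. lia.
  destruct (Nat.eq_dec p q). subst. apply Hninc; lia.
  specialize (IHq p H1 ltac:(lia) ltac:(lia)). specialize (Hninc q ltac:(lia) ltac:(lia)). lia.
Qed.

Lemma Gs_some (N : nat) (n : nat -> nat) gamma
  (Hninc : forall p, (1 <= p)%nat -> (p < N)%nat -> (n p < n (S p))%nat) :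
  forall P p0, (P <= N)%nat -> (1 <= p0 <= P)%nat -> Gs n gamma P (n p0) = gamma (n p0).
Proof.
  induction P; intros p0 HP Hp0. lia. simpl.
  destruct (Nat.eq_dec p0 (S P)).
  - subst. rewrite Gs_none. unfold spike. rewrite Nat.eqb_refl. ring.
    intros p Hp. pose proof (strict_mono N n Hninc (S P) p ltac:(lia) ltac:(lia) HP). lia.
  - rewrite IHP by lia. unfold spike.
    destruct (n p0 =? n (S P))%nat eqn:E; [|ring].
    apply Nat.eqb_eq in E. pose proof (strict_mono N n Hninc (S P) p0 ltac:(lia) ltac:(lia) HP). lia.
Qed.

Lemma ext_n_in N n p : (1 <= p <= N)%nat -> ext_n N n p = n p.
Proof.
  intros H. unfold ext_n. destruct (p =? 0)%nat eqn:E. apply Nat.eqb_eq in E; lia.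
  destruct (p <=? N)%nat eqn:E2. reflexivity. apply Nat.leb_gt in E2; lia.
Qed.
Lemma ext_k_in N k p : (1 <= p <= N)%nat -> ext_k N k p = k p.
Proof.
  intros H. unfold ext_k. destruct (p =? 0)%nat eqn:E. apply Nat.eqb_eq in E; lia.
  destruct (p <=? N)%nat eqn:E2. reflexivity. apply Nat.leb_gt in E2; lia.
Qed.
Lemma ext_n_SN N n : (1 <= N)%nat -> ext_n N n (S N) = (n N + 1)%nat.
Proof.
  intros H. unfold ext_n. destruct (S N =? 0)%nat eqn:E. apply Nat.eqb_eq in E; lia.
  destruct (S N <=? N)%nat eqn:E3. apply Nat.leb_le in E3; lia. reflexivity.
Qed.
Lemma ext_k_SN N k : (1 <= N)%nat -> ext_k N k (S N) = k N.
Proof.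
  intros H. unfold ext_k. destruct (S N =? 0)%nat eqn:E. apply Nat.eqb_eq in E; lia.
  destruct (S N <=? N)%nat eqn:E3. apply Nat.leb_le in E3; lia. reflexivity.
Qed.

Lemma slope_eq N n k P : INR (ext_n N n (S P)) - INR (ext_n N n P) <> 0 ->
  slope N n k (S P) * (INR (ext_n N n (S P)) - INR (ext_n N n P)) =
  INR (ext_k N k (S P)) - INR (ext_k N k P).
Proof.
  intros H. unfold slope. replace (S P - 1)%nat with P by lia. field. exact H.
Qed.

Lemma ext_n_lt N n (Hn1 : (1 <= N)%nat -> (1 <= n 1)%nat)
  (Hninc : forall p, (1 <= p)%nat -> (p < N)%nat -> (n p < n (S p))%nat) P :
  (S P <= N)%nat -> (ext_n N n P < ext_n N n (S P))%nat.
Proof.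
  intros H. rewrite (ext_n_in N n (S P)) by lia. destruct P.
  - unfold ext_n. simpl. specialize (Hn1 ltac:(lia)). lia.
  - rewrite ext_n_in by lia. apply Hninc; lia.
Qed.

Lemma sbp a N n k gamma
  (Ha : (0 < a)%nat)
  (Hn1 : (1 <= N)%nat -> (1 <= n 1)%nat)
  (Hninc : forall p, (1 <= p)%nat -> (p < N)%nat -> (n p < n (S p))%nat)
  (Hgamp : forall p, (1 <= p <= N)%nat ->
      gamma (n p) = / INR a * (slope N n k p - slope N n k (S p)))
  q (Hq : (1 <= q <= N)%nat) :
  forall P, (P <= N)%nat -> Fs n gamma (n q) P * INR a =
    INR (ext_k N k (Nat.min P q)) - INR (ext_n N n (Nat.min P q)) * slope N n k (S P).
Proof.
  assert (Ha' : INR a <> 0) by (apply not_0_INR; lia).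
  induction P; intros HP.
  - simpl. unfold ext_k, ext_n. simpl. ring.
  - simpl Fs. rewrite Rmult_plus_distr_r, IHP by lia.
    rewrite Hgamp by lia.
    destruct (le_lt_dec (S P) q) as [Hle|Hlt].
    + rewrite (Nat.min_l (S P) q), (Nat.min_l P q) by lia.
      rewrite (Nat.min_l (n (S P)) (n q)).
      2:{ destruct (Nat.eq_dec (S P) q). subst; lia.
          pose proof (strict_mono N n Hninc q (S P) ltac:(lia) ltac:(lia) ltac:(lia)). lia. }
      pose proof (ext_n_lt N n Hn1 Hninc P ltac:(lia)) as Hlt.
      apply lt_INR in Hlt.
      pose proof (slope_eq N n k P ltac:(lra)) as Hs.
      rewrite <- (ext_n_in N n (S P)) by lia.
      replace (INR (ext_k N k (S P))) with
        (INR (ext_k N k P) + slope N n k (S P) * (INR (ext_n N n (S P)) - INR (ext_n N n P))) by lra.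
      field. exact Ha'.
    + rewrite (Nat.min_r (S P) q), (Nat.min_r P q) by lia.
      rewrite (Nat.min_r (n (S P)) (n q)).
      2:{ pose proof (strict_mono N n Hninc (S P) q ltac:(lia) ltac:(lia) ltac:(lia)). lia. }
      rewrite (ext_n_in N n q) by lia.
      field. exact Ha'.
Qed.

Lemma check_main a N n k gamma
  (Ha : (0 < a)%nat)
  (Hn1 : (1 <= N)%nat -> (1 <= n 1)%nat)
  (Hninc : forall p, (1 <= p)%nat -> (p < N)%nat -> (n p < n (S p))%nat)
  (Hgam0 : forall m, (1 <= m)%nat ->
      (forall p, (1 <= p <= N)%nat -> n p <> m) -> gamma m = 0)
  (Hgamp : forall p, (1 <= p <= N)%nat ->
      gamma (n p) = / INR a * (slope N n k p - slope N n k (S p)))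
  q (Hq : (1 <= q <= N)%nat) :
  check_omega (n q) gamma = INR (k q) / INR a.
Proof.
  assert (Ha' : INR a <> 0) by (apply not_0_INR; lia).
  assert (Hpos : forall p, (1 <= p <= N)%nat -> (1 <= n p)%nat).
  { intros p Hp. destruct (Nat.eq_dec p 1). subst. apply Hn1; lia.
    pose proof (strict_mono N n Hninc p 1 ltac:(lia) ltac:(lia) ltac:(lia)).
    specialize (Hn1 ltac:(lia)). lia. }
  rewrite (check_omega_ext _ gamma (Gs n gamma N)).
  2:{ intros j Hj. destruct (classic (exists p, (1 <= p <= N)%nat /\ n p = j)) as [[p [Hp E]]|Hno].
      - subst j. symmetry. apply (Gs_some N n gamma Hninc N p); lia.
      - rewrite Gs_none. apply Hgam0. exact Hj.
        all: intros p Hp E; apply Hno; exists p; auto. }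
  rewrite Gs_check by (intros; apply Hpos; lia).
  pose proof (sbp a N n k gamma Ha Hn1 Hninc Hgamp q Hq N (le_n _)) as H.
  rewrite Nat.min_r in H by lia.
  assert (Hs : slope N n k (S N) = 0).
  { unfold slope. rewrite ext_k_SN by lia. replace (S N - 1)%nat with N by lia.
    rewrite ext_k_in by lia. unfold Rdiv. ring. }
  rewrite Hs, ext_k_in in H by lia.
  apply (Rmult_eq_reg_r (INR a)); [|exact Ha']. rewrite H. field. exact Ha'.
Qed.

Lemma cis_period x z : cis (x + 2 * IZR z * PI) = cis x.
Proof.
  unfold cis. destruct (Z_le_gt_dec 0 z) as [H|H].
  - replace (IZR z) with (INR (Z.to_nat z)) by (rewrite INR_IZR_INZ, Z2Nat.id; auto).
    rewrite cos_period, sin_period. reflexivity.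
  - assert (E : x = (x + 2 * IZR z * PI) + 2 * INR (Z.to_nat (- z)) * PI).
    { rewrite INR_IZR_INZ, Z2Nat.id by lia. rewrite opp_IZR. ring. }
    rewrite E at 3 4. rewrite cos_period, sin_period. reflexivity.
Qed.

Lemma omega_ext m f g : (forall j, (1 <= j)%nat -> f j = g j) -> omega m f = omega m g.
Proof. intros H. unfold omega. rewrite (check_omega_ext m f g H). reflexivity. Qed.

Theorem proposition3p2
  (a N : nat) (n k : nat -> nat) (gamma : nat -> R)
  (Ha : (0 < a)%nat)
  (Hn1 : (1 <= N)%nat -> (1 <= n 1)%nat)
  (Hninc : forall p, (1 <= p)%nat -> (p < N)%nat -> (n p < n (S p))%nat)
  (Hkinc : forall p, (1 <= p)%nat -> (p < N)%nat -> (k p < k (S p))%nat)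
  (Hconv : forall p, (1 <= p <= N)%nat ->
      slope N n k p - slope N n k (S p) > 0)
  (Hgam0 : forall m, (1 <= m)%nat ->
      (forall p, (1 <= p <= N)%nat -> n p <> m) -> gamma m = 0)
  (Hgamp : forall p, (1 <= p <= N)%nat ->
      gamma (n p) = / INR a * (slope N n k p - slope N n k (S p))) :
  (forall p, (1 <= p <= N)%nat ->
      check_omega (n p) gamma = INR (k p) / INR a /\
      exists z : Z, omega (n p) gamma = IZR z / INR a)
  /\
  (* consequences, for any model of the BO flow in Birkhoff coordinates *)
  (forall (U : Type) (Sflow : R -> U -> U) (zeta : U -> nat -> C),
     (forall u v, (forall m, (1 <= m)%nat -> zeta u m = zeta v m) -> u = v) ->
     (forall t u m, (1 <= m)%nat ->
        zeta (Sflow t u) m =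
        Cmult (cis (omega m (fun j => Cmod (zeta u j) ^ 2) * t)) (zeta u m)) ->
     forall u0 : U,
       (forall m, (1 <= m)%nat -> Cmod (zeta u0 m) ^ 2 = gamma m) ->
       (exists M, forall m, (M <= m)%nat -> zeta u0 m = 0%C) /\
       (forall t, Sflow (t + 2 * PI * INR a) u0 = Sflow t u0)).
Proof.
  assert (Ha' : INR a <> 0) by (apply not_0_INR; lia).
  assert (Hint : forall p, (1 <= p <= N)%nat ->
      check_omega (n p) gamma = INR (k p) / INR a /\
      exists z : Z, omega (n p) gamma = IZR z / INR a).
  { intros p Hp. pose proof (check_main a N n k gamma Ha Hn1 Hninc Hgam0 Hgamp p Hp) as H.
    split. exact H.
    exists (Z.of_nat a * (Z.of_nat (n p) * Z.of_nat (n p)) - 2 * Z.of_nat (k p))%Z.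
    unfold omega. rewrite H. rewrite minus_IZR, !mult_IZR, <- !INR_IZR_INZ. field. exact Ha'. }
  split. exact Hint.
  intros U Sflow zeta Hinj Hflow u0 Hu0. split.
  - exists (S (n N)). intros m Hm. apply Cmod_eq_0.
    assert (G : gamma m = 0).
    { apply Hgam0. lia. intros p Hp E. subst m.
      destruct (Nat.eq_dec p N). subst; lia.
      pose proof (strict_mono N n Hninc N p ltac:(lia) ltac:(lia) ltac:(lia)). lia. }
    rewrite <- Hu0 in G by lia. pose proof (Cmod_ge_0 (zeta u0 m)). nra.
  - intros t. apply Hinj. intros m Hm. rewrite !Hflow by exact Hm.
    destruct (classic (zeta u0 m = 0%C)) as [Z0|Z0].
    + rewrite Z0, !Cmult_0_r. reflexivity.
    + assert (Hex : exists p, (1 <= p <= N)%nat /\ n p = m).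
      { apply NNPP. intros Hno. apply Z0. apply Cmod_eq_0.
        assert (G : gamma m = 0).
        { apply Hgam0. exact Hm. intros p Hp E. apply Hno. exists p; auto. }
        rewrite <- Hu0 in G by lia. pose proof (Cmod_ge_0 (zeta u0 m)). nra. }
      destruct Hex as [p [Hp E]].
      rewrite (omega_ext m _ gamma) by (intros; apply Hu0; auto).
      subst m. destruct (Hint p Hp) as [_ [z Hz]]. rewrite Hz.
      replace (IZR z / INR a * (t + 2 * PI * INR a)) with (IZR z / INR a * t + 2 * IZR z * PI)
        by (field; exact Ha').
      rewrite cis_period. reflexivity.
Qed.
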